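(* Let $\mathcal{H}$ be a complex Hilbert space, $A\in\mathcal{B}(\mathcal{H})$ positive and $S\in\mathcal{B}_A(\mathcal{H})$. Then for every $\theta\in\mathbb{R}$, $$d\omega_A^2(S)\le\omega_A^2\left(e^{i\theta}S+S^{\sharp_A}S\right)+2\|S\|_A^2\left\|\Re_A\left(e^{i\theta}S\right)\right\|_A .$$
   Context: $\mathcal{B}(\mathcal{H})$ denotes the bounded linear operators on $\mathcal{H}$. For positive $A$, $\langle x,z\rangle_A=\langle Ax,z\rangle$ and $\|z\|_A=\|A^{1/2}z\|$. $\mathcal{B}_A(\mathcal{H})$ is the set of $S\in\mathcal{B}(\mathcal{H})$ for which some $R\in\mathcal{B}(\mathcal{H})$ satisfies $AR=S^*A$; for such $S$, $S^{\sharp_A}=A^{\dagger}S^*A$ with $A^\dagger$ the Moore–Penrose inverse of $A$. $\Re_A(T)=\frac{T+T^{\sharp_A}}{2}$. For operators $T$ bounded with respect to $\|\cdot\|_A$: $\|T\|_A=\sup_{\|z\|_A=1}\|Tz\|_A$, $\omega_A(T)=\sup_{\|z\|_A=1}|\langle Tz,z\rangle_A|$, and $d\omega_A(T)=\sup_{\|z\|_A=1}(|\langle Tz,z\rangle_A|^2+\|Tz\|_A^4)^{1/2}$. *)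

(* Defs.v *)
From HB Require Import structures.
From mathcomp Require Import all_boot all_order all_algebra.
From mathcomp Require Import complex.
From mathcomp Require Import boolp classical_sets reals.
From mathcomp Require Import trigo.
From Stdlib Require Import ClassicalEpsilon.

Set Implicit Arguments.
Unset Strict Implicit.
Unset Printing Implicit Defensive.

Import Order.TTheory GRing.Theory Num.Theory.
Local Open Scope ring_scope.
Local Open Scope classical_set_scope.

Section HilbertDefs.
Variable R : realType.
Local Notation C := (R[i]).

Definition hnorm (H : lmodType C) (ip : H -> H -> C) (x : H) : R :=
  Num.sqrt (complex.Re (ip x x)).

Definition is_complex_hilbert (H : lmodType C) (ip : H -> H -> C) : Prop :=
  [/\ (forall (a : C) (x y z : H), ip (a *: x + y) z = a * ip x z + ip y z),
      (forall x y : H, ip y x = Num.conj (ip x y)),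
      (forall x : H, 0 <= ip x x),
      (forall x : H, ip x x = 0 -> x = 0) &
      (forall u : nat -> H,
         (forall e : R, 0 < e -> exists N : nat, forall m n : nat,
             (N <= m)%N -> (N <= n)%N -> hnorm ip (u m - u n) < e) ->
         exists l : H, forall e : R, 0 < e -> exists N : nat, forall n : nat,
             (N <= n)%N -> hnorm ip (u n - l) < e)].

Definition bounded_linear (H : lmodType C) (ip : H -> H -> C) (T : H -> H) :=
  (forall (a : C) (x y : H), T (a *: x + y) = a *: T x + T y) /\
  exists M : R, forall x : H, hnorm ip (T x) <= M * hnorm ip x.

Definition positive_op (H : lmodType C) (ip : H -> H -> C) (A : H -> H) :=
  bounded_linear ip A /\ forall x : H, 0 <= ip (A x) x.

Definition is_adjoint (H : lmodType C) (ip : H -> H -> C) (T Tstar : H -> H) :=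
  forall x y : H, ip (T x) y = ip x (Tstar y).

Definition adj (H : lmodType C) (ip : H -> H -> C) (T : H -> H) : H -> H :=
  epsilon (inhabits (fun x : H => x)) (is_adjoint ip T).

(* Moore--Penrose inverse A^dagger y: the unique x in N(A)^perp with
   A x = P_{closure R(A)} y, i.e. with y - A x orthogonal to R(A).
   (Defined on D(A^dagger) = R(A) + R(A)^perp; arbitrary (chosen) outside.) *)
Definition mp_inv (H : lmodType C) (ip : H -> H -> C) (A : H -> H) (y : H) : H :=
  epsilon (inhabits (0 : H))
    (fun x => (forall n : H, A n = 0 -> ip x n = 0) /\
              (forall w : H, ip (y - A x) (A w) = 0)).

Definition in_BA (H : lmodType C) (ip : H -> H -> C) (A S : H -> H) : Prop :=
  bounded_linear ip S /\
  exists Rop : H -> H, bounded_linear ip Rop /\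
    forall x : H, A (Rop x) = adj ip S (A x).

Definition sharpA (H : lmodType C) (ip : H -> H -> C) (A S : H -> H) : H -> H :=
  fun x => mp_inv ip A (adj ip S (A x)).

Definition ReA (H : lmodType C) (ip : H -> H -> C) (A T : H -> H) : H -> H :=
  fun x => (2%:R^-1 : C) *: (T x + sharpA ip A T x).

(* <x, z>_A = <A x, z> and ||z||_A = ||A^{1/2} z|| = sqrt <A z, z>. *)
Definition ipA (H : lmodType C) (ip : H -> H -> C) (A : H -> H) (x z : H) : C :=
  ip (A x) z.

Definition normA (H : lmodType C) (ip : H -> H -> C) (A : H -> H) (z : H) : R :=
  Num.sqrt (complex.Re (ipA ip A z z)).

Definition unitA (H : lmodType C) (ip : H -> H -> C) (A : H -> H) : set H :=
  [set z | normA ip A z = 1].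

Definition opnormA (H : lmodType C) (ip : H -> H -> C) (A T : H -> H) : R :=
  sup [set normA ip A (T z) | z in unitA ip A].

Definition numradA (H : lmodType C) (ip : H -> H -> C) (A T : H -> H) : R :=
  sup [set Normc.normc (ipA ip A (T z) z) | z in unitA ip A].

Definition dnumradA (H : lmodType C) (ip : H -> H -> C) (A T : H -> H) : R :=
  sup [set Num.sqrt (Normc.normc (ipA ip A (T z) z) ^+ 2 + normA ip A (T z) ^+ 4)
      | z in unitA ip A].

Definition expi (theta : R) : C := Complex (cos theta) (sin theta).

End HilbertDefs.

(* Main.v *)
Require Import Defs.
From HB Require Import structures.
From mathcomp Require Import all_boot all_order all_algebra.
From mathcomp Require Import complex.
From mathcomp Require Import boolp classical_sets reals trigo.
From mathcomp Require Import ring lra.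
From Stdlib Require Import ClassicalEpsilon.
Set Implicit Arguments.
Unset Strict Implicit.
Unset Printing Implicit Defensive.
Import Order.TTheory GRing.Theory Num.Theory.
Local Open Scope ring_scope.

Section Cplx.
Variable R : realType.
Local Notation C := R[i].

Lemma c_real_ge0 (z : C) : 0 <= z -> z = ((complex.Re z)%:C)%C.
Proof. case: z => a b; rewrite lecE /= => /andP[/eqP h _]; by rewrite h. Qed.

Lemma c_Re_ge0 (z : C) : 0 <= z -> 0 <= complex.Re z.
Proof. by rewrite lecE /= => /andP[_ h]. Qed.

Lemma c_normE (z : C) : Normc.normc z ^+ 2 = complex.Re z ^+ 2 + complex.Im z ^+ 2.
Proof. case: z => a b /=; rewrite sqr_sqrtr //; apply: addr_ge0; apply: sqr_ge0. Qed.

Lemma c_norm_ge0 (z : C) : 0 <= Normc.normc z.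
Proof. case: z => a b /=; exact: sqrtr_ge0. Qed.

Lemma c_absRe_le (z : C) : `|complex.Re z| <= Normc.normc z.
Proof.
rewrite -(@ler_pXn2r _ 2) ?nnegrE ?c_norm_ge0 //.
by rewrite c_normE real_normK ?num_real // lerDl sqr_ge0.
Qed.

Lemma c_Re_le (z : C) : complex.Re z <= Normc.normc z.
Proof. exact: le_trans (ler_norm _) (c_absRe_le z). Qed.

Lemma c_normK (z : C) : z * Num.conj z = (((Normc.normc z) ^+ 2)%:C)%C.
Proof. by rewrite rmorphXn /= -normCK. Qed.

Lemma cjD (a b : C) : Num.conj (a + b) = Num.conj a + Num.conj b.
Proof. exact: rmorphD. Qed.
Lemma cjB (a b : C) : Num.conj (a - b) = Num.conj a - Num.conj b.
Proof. exact: rmorphB. Qed.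
Lemma cjN (a : C) : Num.conj (- a) = - Num.conj a.
Proof. exact: rmorphN. Qed.
Lemma cjM (a b : C) : Num.conj (a * b) = Num.conj a * Num.conj b.
Proof. exact: rmorphM. Qed.
Lemma cjK (a : C) : Num.conj (Num.conj a) = a.
Proof. exact: conjCK. Qed.
Lemma cj0 : Num.conj (0 : C) = 0.
Proof. exact: rmorph0. Qed.
Lemma cj1 : Num.conj (1 : C) = 1.
Proof. exact: rmorph1. Qed.

Lemma c_ReC (x : R) : complex.Re ((x%:C)%C) = x. Proof. by []. Qed.

Lemma c_conjC (x : R) : Num.conj ((x%:C)%C : C) = (x%:C)%C.
Proof. exact: conjc_real. Qed.

End Cplx.

Section Form.
Variable R : realType.
Local Notation C := R[i].
Variable H : lmodType C.
Variable f : H -> H -> C.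
Hypothesis flin : forall (a : C) (x y z : H), f (a *: x + y) z = a * f x z + f y z.
Hypothesis fsym : forall x y : H, f y x = Num.conj (f x y).
Hypothesis fpos : forall x : H, 0 <= f x x.

Definition qf x := complex.Re (f x x).
Definition nf x := Num.sqrt (qf x).

Lemma f0l z : f 0 z = 0.
Proof.
have := flin (-1) 0 0 z; rewrite scaler0 addr0 mulN1r => h.
by rewrite addNr in h.
Qed.
Lemma fDl x y z : f (x + y) z = f x z + f y z.
Proof. by rewrite -{1}[x]scale1r flin mul1r. Qed.
Lemma fZl a x z : f (a *: x) z = a * f x z.
Proof. by rewrite -[a *: x]addr0 flin f0l addr0. Qed.
Lemma fNl x z : f (- x) z = - f x z.
Proof. by rewrite -scaleN1r fZl mulN1r. Qed.
Lemma fBl x y z : f (x - y) z = f x z - f y z.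
Proof. by rewrite fDl fNl. Qed.
Lemma f0r z : f z 0 = 0.
Proof. by rewrite fsym f0l cj0. Qed.
Lemma fDr x y z : f x (y + z) = f x y + f x z.
Proof. by rewrite fsym fDl cjD -!fsym. Qed.
Lemma fZr a x z : f x (a *: z) = Num.conj a * f x z.
Proof. by rewrite fsym fZl cjM -fsym. Qed.
Lemma fNr x z : f x (- z) = - f x z.
Proof. by rewrite -scaleN1r fZr cjN cj1 mulN1r. Qed.
Lemma fBr x y z : f x (y - z) = f x y - f x z.
Proof. by rewrite fDr fNr. Qed.

Lemma f_real x : f x x = ((qf x)%:C)%C.
Proof. exact: c_real_ge0. Qed.
Lemma qf_ge0 x : 0 <= qf x.
Proof. exact: c_Re_ge0. Qed.
Lemma nf_ge0 x : 0 <= nf x.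
Proof. exact: sqrtr_ge0. Qed.
Lemma nf2 x : nf x ^+ 2 = qf x.
Proof. by rewrite sqr_sqrtr // qf_ge0. Qed.

Lemma f_expand x y t :
  f (x - t *: y) (x - t *: y) =
  f x x - Num.conj t * f x y - t * f y x + t * Num.conj t * f y y.
Proof. rewrite !(fBl, fBr, fZl, fZr). ring. Qed.

Lemma f_quad x y (r : R) :
  qf (x - ((r%:C)%C * f x y) *: y) =
  qf x - 2%:R * r * (Normc.normc (f x y) ^+ 2) + r * r * (Normc.normc (f x y) ^+ 2) * qf y.
Proof.
set p := f x y; set X := qf x; set Y := qf y; set N := Normc.normc p ^+ 2.
have pp := c_normK p; rewrite -/N in pp; clearbody N.
rewrite /qf f_expand -/p (fsym x y) -/p (f_real x) (f_real y) -/X -/Y.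
rewrite cjM c_conjC.
have -> : (X%:C)%C - (r%:C)%C * Num.conj p * p - (r%:C)%C * p * Num.conj p +
    (r%:C)%C * p * ((r%:C)%C * Num.conj p) * (Y%:C)%C =
    ((X - 2%:R * r * N + r * r * N * Y)%:C)%C.
  rewrite !(rmorphD, rmorphB, rmorphN, rmorphM, rmorph_nat) /= -pp; ring.
by [].
Qed.

Lemma f_CS x y : Normc.normc (f x y) ^+ 2 <= qf x * qf y.
Proof.
set p := f x y; set X := qf x; set Y := qf y; set N := Normc.normc p ^+ 2.
have X0 : 0 <= X by apply: qf_ge0.
have Y0 : 0 <= Y by apply: qf_ge0.
have N0 : 0 <= N by apply: sqr_ge0.
have key : forall r : R, 0 <= X - 2%:R * r * N + r * r * N * Y.
  by move=> r; have := qf_ge0 (x - ((r%:C)%C * p) *: y); rewrite f_quad.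
clearbody N.
have [N00|Npos] := eqVneq N 0.
  by rewrite N00 mulr_ge0.
have Ngt : 0 < N by rewrite lt_def Npos N0.
have [Y00|Ypos] := eqVneq Y 0.
  have := key ((X + 1) / (2%:R * N)); rewrite Y00 mulr0 addr0.
  have -> : X - 2%:R * ((X + 1) / (2%:R * N)) * N = -1.
    by field; rewrite Npos.
  by rewrite ler0N1.
have Ygt : 0 < Y by rewrite lt_def Ypos Y0.
have := key (Y^-1).
have -> : X - 2%:R * Y^-1 * N + Y^-1 * Y^-1 * N * Y = (X * Y - N) / Y.
  by field; rewrite Ypos.
by rewrite pmulr_lge0 ?invr_gt0 // subr_ge0.
Qed.

Lemma f_CS' x y : Normc.normc (f x y) <= nf x * nf y.
Proof.
rewrite -(@ler_pXn2r _ 2) ?nnegrE ?c_norm_ge0 ?mulr_ge0 ?nf_ge0 //.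
by rewrite exprMn !nf2 f_CS.
Qed.

Lemma qfD x y : qf (x + y) = qf x + qf y + 2%:R * complex.Re (f x y).
Proof.
rewrite /qf fDl !fDr (fsym x y).
case: (f x x) => ? ?; case: (f y y) => ? ?; case: (f x y) => ? ? /=; ring.
Qed.

Lemma qfN x : qf (- x) = qf x.
Proof. by rewrite /qf fNl fNr opprK. Qed.

Lemma qfB x y : qf (x - y) = qf (y - x).
Proof. by rewrite -qfN opprB. Qed.

Lemma qfDN x y : qf (x - y) = qf x + qf y - 2%:R * complex.Re (f x y).
Proof.
rewrite qfD qfN fNr; case: (f x y) => ? ? /=; ring.
Qed.

Lemma par_law x y : qf (x + y) + qf (x - y) = 2%:R * qf x + 2%:R * qf y.
Proof. rewrite qfD qfDN; ring. Qed.

Lemma nfD x y : nf (x + y) <= nf x + nf y.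
Proof.
have h1 : complex.Re (f x y) <= nf x * nf y by apply: le_trans (c_Re_le _) (f_CS' _ _).
rewrite -(@ler_pXn2r _ 2) ?nnegrE ?addr_ge0 ?nf_ge0 //.
rewrite nf2 qfD sqrrD !nf2; lra.
Qed.

Lemma qfZ a x : qf (a *: x) = Normc.normc a ^+ 2 * qf x.
Proof.
rewrite /qf fZl fZr mulrA c_normK (f_real x).
by rewrite -rmorphM.
Qed.

Lemma nfZ a x : nf (a *: x) = Normc.normc a * nf x.
Proof.
by rewrite /nf qfZ sqrtrM ?sqr_ge0 // sqrtr_sqr ger0_norm // c_norm_ge0.
Qed.

Lemma nfN x : nf (- x) = nf x.
Proof. by rewrite /nf /qf fNl fNr opprK. Qed.

Lemma nfB x y : nf (x - y) = nf (y - x).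
Proof. by rewrite -nfN opprB. Qed.

Lemma qf0 : qf 0 = 0.
Proof. by rewrite /qf f0l. Qed.

Lemma nf0 : nf 0 = 0.
Proof. by rewrite /nf qf0 sqrtr0. Qed.

End Form.

Local Open Scope classical_set_scope.

Lemma arch_inv (R : realType) (x : R) : 0 < x ->
  exists N : nat, forall n, (N <= n)%N -> (n.+1%:R)^-1 < x.
Proof.
move=> x0; exists (Num.truncn (x^-1)) => n Nn.
have h1 := truncnS_gt (x^-1).
have h2 : (Num.truncn x^-1).+1%:R <= n.+1%:R :> R by rewrite ler_nat ltnS.
have h : x^-1 < n.+1%:R by apply: lt_le_trans h1 h2.
by rewrite -(invrK x) ltf_pV2 ?posrE ?invr_gt0 ?ltr0Sn.
Qed.

Lemma c_normR (R : realType) (r : R) : Normc.normc ((r%:C)%C : R[i]) = `|r|.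
Proof. by rewrite /= expr0n /= addr0 sqrtr_sqr. Qed.

Section Hilb.
Variable R : realType.
Local Notation C := R[i].
Variable H : lmodType C.
Variable ip : H -> H -> C.
Hypothesis iplin : forall (a : C) (x y z : H), ip (a *: x + y) z = a * ip x z + ip y z.
Hypothesis ipsym : forall x y : H, ip y x = Num.conj (ip x y).
Hypothesis ippos : forall x : H, 0 <= ip x x.
Hypothesis ipdef : forall x : H, ip x x = 0 -> x = 0.
Hypothesis ipcomp : forall u : nat -> H,
         (forall e : R, 0 < e -> exists N : nat, forall m n : nat,
             (N <= m)%N -> (N <= n)%N -> nf ip (u m - u n) < e) ->
         exists l : H, forall e : R, 0 < e -> exists N : nat, forall n : nat,
             (N <= n)%N -> nf ip (u n - l) < e.

Local Notation q := (qf ip).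
Local Notation nr := (nf ip).

Let q_ge0 := qf_ge0 ippos.
Let n_ge0 := nf_ge0 ip.
Let n2 := nf2 ippos.
Let nD := nfD iplin ipsym ippos.
Let qB := qfB iplin ipsym.
Let qZ := qfZ iplin ipsym ippos.
Let quad := f_quad iplin ipsym ippos.
Let ireal := f_real ippos.

Lemma n_eq0 x : nr x = 0 -> x = 0.
Proof.
move=> /eqP; rewrite sqrtr_eq0 => h.
have h0 : q x = 0 by apply/eqP; rewrite eq_le h q_ge0.
by apply: ipdef; rewrite ireal h0.
Qed.

Lemma n_small x : (forall e, 0 < e -> nr x < e) -> x = 0.
Proof.
move=> h; apply: n_eq0; apply/eqP; rewrite eq_le n_ge0 andbT.
by rewrite leNgt; apply/negP => hx; have := h _ hx; rewrite ltxx.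
Qed.

Lemma n_lt x e : 0 < e -> q x < e * e -> nr x < e.
Proof.
move=> e0 h; rewrite -(@ltr_pXn2r _ 2) ?nnegrE ?n_ge0 ?ltW // n2.
by rewrite expr2.
Qed.

Lemma proj_thm (M : H -> Prop) : M 0 -> (forall x y, M x -> M y -> M (x + y)) ->
  (forall (a : C) x, M x -> M (a *: x)) ->
  (forall l, (forall e, 0 < e -> exists u, M u /\ nr (u - l) < e) -> M l) ->
  forall w, exists m, M m /\ forall v, M v -> ip (w - m) v = 0.
Proof.
move=> M0 MD MZ Mcl w.
set Q := image M (fun m : H => q (w - m)).
have Qn : Q !=set0 by exists (q (w - 0)), 0.
have Ql : has_lbound Q by exists 0 => _ [m _ <-]; apply: q_ge0.
have Qi : has_inf Q by [].
set d := inf Q.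
have dlb : forall m, M m -> d <= q (w - m).
  by move=> m Mm; apply: ge_inf => //; exists m.
have d0 : 0 <= d by apply: lb_le_inf => // _ [m _ <-]; apply: q_ge0.
have : forall k : nat, exists m, M m /\ q (w - m) < d + (k.+1%:R)^-1.
  move=> k; have kp : 0 < (k.+1%:R : R)^-1 by rewrite invr_gt0 ltr0Sn.
  by have [_ [m Mm <-] h] := inf_adherent kp Qi; exists m.
move=> /choice [mm Hmm].
have par : forall a b, q (mm a - mm b) <= 2%:R * (a.+1%:R)^-1 + 2%:R * (b.+1%:R)^-1.
  move=> a b.
  set x := w - mm a; set y := w - mm b.
  have e1 : x - y = mm b - mm a.
    by rewrite /x /y opprB addrC addrA subrK.
  set mid := (2%:R^-1 : C) *: (mm a + mm b).
  have e2 : x + y = (2%:R : C) *: (w - mid).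
    rewrite /mid scalerBr scalerA mulfV ?pnatr_eq0 // scale1r scaler_nat.
    by rewrite /x /y mulr2n opprD addrACA.
  have hm : M mid by apply: MZ; apply: MD; [case: (Hmm a)|case: (Hmm b)].
  have := par_law iplin ipsym x y; rewrite e1 e2 qZ.
  have -> : Normc.normc (2%:R : C) = 2%:R.
    by rewrite -(rmorph_nat (real_complex R)) c_normR ger0_norm.
  have := dlb _ hm; have [_ ha] := Hmm a; have [_ hb] := Hmm b.
  rewrite -/x -/y in ha hb; rewrite (qB (mm a) (mm b)).
  have -> : (2%:R : R) ^+ 2 = 4%:R by rewrite expr2 -natrM.
  move=> h1 h2; move: ha hb h1 h2; move: (q x) (q y) (q (w - mid)) (q (mm b - mm a)) ((a.+1%:R : R)^-1) ((b.+1%:R : R)^-1) => X Y Z P ia ib; lra.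
have cau : forall e, 0 < e -> exists N, forall a b, (N <= a)%N -> (N <= b)%N ->
    nr (mm a - mm b) < e.
  move=> e e0.
  have ee : 0 < e * e / 4%:R by rewrite divr_gt0 ?mulr_gt0.
  have [N HN] := arch_inv ee.
  exists N => a b Na Nb; apply: n_lt => //.
  have := HN a Na; have := HN b Nb; have := par a b.
  move: ((a.+1%:R : R)^-1) ((b.+1%:R : R)^-1) => ia ib; lra.
have [l Hl] := ipcomp cau.
have Ml : M l.
  apply: Mcl => e e0; have [N HN] := Hl e e0.
  by exists (mm N); split; [case: (Hmm N)|apply: HN].
have qle : q (w - l) <= d.
  apply/ler_addgt0Pr => eps eps0.
  set K := Num.sqrt (d + 1).
  have K0 : 0 <= K by apply: sqrtr_ge0.
  set del := eps / (2%:R * K + 2%:R + eps).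
  have den0 : 0 < 2%:R * K + 2%:R + eps.
    by apply: ltr_wpDl => //; apply: addr_ge0 => //; apply: mulr_ge0.
  have del0 : 0 < del by rewrite divr_gt0.
  have del1 : del <= 1.
    by rewrite ler_pdivrMr // mul1r lerDr addr_ge0 ?mulr_ge0.
  have del2 : del * (2%:R * K + 2%:R) <= eps.
    rewrite /del mulrAC ler_pdivrMr // ler_pM2l //.
    by rewrite lerDl ltW.
  clearbody del.
  have [N1 HN1] := arch_inv del0; have [N2 HN2] := Hl del del0.
  set k := maxn N1 N2.
  have hk1 := HN1 k (leq_maxl _ _); have hk2 := HN2 k (leq_maxr _ _).
  have [_ hk3] := Hmm k.
  move: hk1 hk3; move: ((k.+1%:R : R)^-1) => ik hk1 hk3.
  set a := nr (w - mm k); set b := nr (mm k - l).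
  have a0 : 0 <= a by apply: n_ge0.
  have b0 : 0 <= b by apply: n_ge0.
  have a2 : a ^+ 2 < d + del by rewrite /a n2; lra.
  have aK : a <= K.
    have hK : K ^+ 2 = d + 1 by rewrite sqr_sqrtr // addr_ge0.
    rewrite -(@ler_pXn2r _ 2) ?nnegrE // hK; lra.
  have hab : nr (w - l) <= a + b.
    by have := nD (w - mm k) (mm k - l); rewrite addrA subrK.
  have : q (w - l) <= (a + b) ^+ 2.
    rewrite -n2; apply: lerXn2r; rewrite ?nnegrE ?addr_ge0 //.
  have hk2b : b < del := hk2.
  have hb1 : b <= 1 by lra.
  have hb2 : b * b <= del.
    by apply: le_trans (ler_wpM2l b0 hb1) _; rewrite mulr1 ltW.
  have hab2 : a * b <= K * del by apply: ler_pM => //; apply: ltW.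
  have e3 : (a + b) ^+ 2 = a ^+ 2 + 2%:R * (a * b) + b * b by ring.
  rewrite e3 => h.
  have : del * (2%:R * K + 2%:R) = 2%:R * (K * del) + 2%:R * del by ring.
  lra.
exists l; split => // v Mv.
set p := w - l.
have hq : forall r : R, q p <= q (p - ((r%:C)%C * ip p v) *: v).
  move=> r; apply: le_trans qle _; rewrite /p -addrA -opprD.
  by apply: dlb; apply: MD => //; apply: MZ.
set N := Normc.normc (ip p v) ^+ 2.
have N0 : 0 <= N by apply: sqr_ge0.
have Y0 := q_ge0 v.
have : N <= 0.
  rewrite leNgt; apply/negP => Npos.
  set s := (q v + 1)^-1.
  have s0 : 0 < s by rewrite invr_gt0 ltr_wpDl.
  have sY : s * q v = 1 - s.
    by rewrite /s -[X in _ * X](addrK 1) mulrBr mulVf ?mulr1 // gt_eqF // ltr_wpDl.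
  have := hq s; rewrite quad -/N.
  have -> : s * s * N * q v = s * N * (s * q v) by ring.
  rewrite sY; nra.
move=> hN; have : N = 0 by apply/eqP; rewrite eq_le hN N0.
by move/eqP; rewrite sqrf_eq0 => /eqP /Normc.eq0_normc.
Qed.

Let nB := nfB iplin ipsym.
Let CS := f_CS' iplin ipsym ippos.

Lemma riesz (g : H -> C) : (forall (a : C) x y, g (a *: x + y) = a * g x + g y) ->
  (exists K : R, forall x, Normc.normc (g x) <= K * nr x) ->
  exists v, forall x, g x = ip x v.
Proof.
move=> glin [K gK].
have g0 : g 0 = 0.
  by have := glin (-1) 0 0; rewrite scaler0 addr0 mulN1r addNr.
have gD : forall x y, g (x + y) = g x + g y.
  by move=> x y; rewrite -{1}[x]scale1r glin mul1r.
have gZ : forall a x, g (a *: x) = a * g x.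
  by move=> a x; rewrite -[a *: x]addr0 glin g0 addr0.
have gB : forall x y, g (x - y) = g x - g y.
  by move=> x y; rewrite gD -scaleN1r gZ mulN1r.
case: (pselect (forall x, g x = 0)) => [gz|].
  by exists 0 => x; rewrite gz (f0r iplin ipsym).
move=> /existsNP [w gw].
pose M := fun x => g x = 0.
have MD : forall x y, M x -> M y -> M (x + y).
  by move=> x y; rewrite /M gD => -> ->; rewrite addr0.
have MZ : forall (a : C) x, M x -> M (a *: x).
  by move=> a x; rewrite /M gZ => ->; rewrite mulr0.
have Mcl : forall l, (forall e, 0 < e -> exists u, M u /\ nr (u - l) < e) -> M l.
  move=> l hl; rewrite /M; case: (eqVneq (g l) 0) => // gl.
  set c := Normc.normc (g l).
  have c0 : 0 < c.
    rewrite lt_def c_norm_ge0 andbT; apply/eqP => /Normc.eq0_normc.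
    by apply/eqP.
  set e := c / (`|K| + 1).
  have K1 : 0 < `|K| + 1 by apply: ltr_wpDl.
  have e0 : 0 < e by rewrite divr_gt0.
  have [u [Mu hu]] := hl e e0.
  have h1 : c <= K * nr (l - u).
    by rewrite /c -[g l]subr0 -Mu -gB gK.
  have h2 : K * nr (l - u) <= `|K| * nr (l - u).
    by apply: ler_wpM2r; [apply: n_ge0|apply: ler_norm].
  have h3 : `|K| * nr (l - u) <= `|K| * e.
    by apply: ler_wpM2l => //; rewrite nB ltW.
  have h4 : `|K| * e = c - e.
    rewrite /e; field; by rewrite gt_eqF.
  have : c <= c - e by rewrite -h4 (le_trans h1 (le_trans h2 h3)).
  move=> h; have h5 : c - e < c by rewrite ltrBlDr ltrDl.
  by have := lt_le_trans h5 h; rewrite ltxx.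
have M0 : M 0 by [].
have [m [Mm Hm]] := proj_thm M0 MD MZ Mcl w.
set p := w - m.
have gp : g p != 0 by rewrite /p gB Mm subr0; apply/eqP.
have pp : ip p p != 0.
  by apply/eqP => /ipdef hp; move: gp; rewrite hp g0 eqxx.
exists (Num.conj (g p / ip p p) *: p) => x.
set c := g x / g p.
have Mx : M (x - c *: p) by rewrite /M gB gZ /c divfK ?subrr.
have hx : ip p x = Num.conj c * ip p p.
  have := Hm _ Mx; rewrite -/p (fBr iplin ipsym) (fZr iplin ipsym).
  by move=> /eqP; rewrite subr_eq0 => /eqP.
rewrite (fZr iplin ipsym) cjK (ipsym p x) hx cjM cjK -(ipsym p p) /c.
by field; rewrite gp pp.
Qed.

Lemma adj_exists (T : H -> H) : bounded_linear ip T -> exists Ts, is_adjoint ip T Ts.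
Proof.
move=> [Tlin [MT hT]].
have : forall y, exists v, forall x, ip (T x) y = ip x v.
  move=> y; apply: riesz.
    by move=> a x x'; rewrite Tlin iplin.
  exists (MT * nr y) => x; apply: le_trans (CS (T x) y) _.
  rewrite mulrAC; apply: ler_wpM2r; first exact: n_ge0.
  exact: hT.
by move=> /choice [Ts HTs]; exists Ts => x y; apply: HTs.
Qed.

End Hilb.

Lemma sup_ge0 (R : realType) (E : set R) : (forall x, E x -> 0 <= x) -> 0 <= sup E.
Proof.
move=> h; case: (pselect (has_sup E)) => [hs|hs]; last by rewrite sup_out.
have [x Ex] := hs.1; apply: le_trans (h x Ex) _.
exact: sup_upper_bound.
Qed.

Lemma cj_i (R : realType) : Num.conj ('i%C : R[i]) = - 'i%C.
Proof. by apply/eqP; rewrite eq_complex /= oppr0 !eqxx. Qed.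

Section Ops.
Variable R : realType.
Local Notation C := R[i].
Variable H : lmodType C.
Variable ip : H -> H -> C.
Hypothesis iplin : forall (a : C) (x y z : H), ip (a *: x + y) z = a * ip x z + ip y z.
Hypothesis ipsym : forall x y : H, ip y x = Num.conj (ip x y).
Hypothesis ippos : forall x : H, 0 <= ip x x.
Hypothesis ipdef : forall x : H, ip x x = 0 -> x = 0.
Hypothesis ipcomp : forall u : nat -> H,
         (forall e : R, 0 < e -> exists N : nat, forall m n : nat,
             (N <= m)%N -> (N <= n)%N -> nf ip (u m - u n) < e) ->
         exists l : H, forall e : R, 0 < e -> exists N : nat, forall n : nat,
             (N <= n)%N -> nf ip (u n - l) < e.
Variable A : H -> H.
Hypothesis Apos : positive_op ip A.

Local Notation nr := (nf ip).
Let n_ge0 := nf_ge0 ip.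
Let ireal := f_real ippos.
Let ip0l := f0l iplin.
Let ip0r := f0r iplin ipsym.
Let ipDl := fDl iplin.
Let ipZl := fZl iplin.
Let ipDr := fDr iplin ipsym.
Let ipZr := fZr iplin ipsym.
Let ipBl := fBl iplin.
Let ipBr := fBr iplin ipsym.

Lemma Alin a x y : A (a *: x + y) = a *: A x + A y.
Proof. by case: Apos => [[h _] _]. Qed.
Lemma A0 : A 0 = 0.
Proof. by have := Alin (-1) 0 0; rewrite scaler0 addr0 scaleN1r addNr. Qed.
Lemma AD x y : A (x + y) = A x + A y.
Proof. by rewrite -{1}[x]scale1r Alin scale1r. Qed.
Lemma AZ a x : A (a *: x) = a *: A x.
Proof. by rewrite -[a *: x]addr0 Alin A0 addr0. Qed.
Lemma AB x y : A (x - y) = A x - A y.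
Proof. by rewrite AD -scaleN1r AZ scaleN1r. Qed.

Lemma A_selfadj x y : ip (A x) y = ip x (A y).
Proof.
pose d u v := ip (A u) v - ip u (A v).
have dxx : forall u, d u u = 0.
  move=> u; have hr := c_real_ge0 (Apos.2 u).
  by rewrite /d (ipsym (A u) u) hr c_conjC subrr.
have dexp : forall c : C, d (x + c *: y) (x + c *: y) =
    d x x + Num.conj c * d x y + c * d y x + c * Num.conj c * d y y.
  by move=> c; rewrite /d !(AD, AZ, ipDl, ipZl, ipDr, ipZr); ring.
have h1 := dexp 1; have h2 := dexp 'i%C.
rewrite !dxx cj1 in h1; rewrite !dxx cj_i in h2.
have e1 : d x y + d y x = 0 by rewrite [RHS]h1; ring.
have e2 : - 'i%C * d x y + 'i%C * d y x = 0 by rewrite [RHS]h2; ring.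
have : (2%:R * 'i%C) * d x y = 0.
  have -> : (2%:R * 'i%C) * d x y =
    'i%C * (d x y + d y x) - (- 'i%C * d x y + 'i%C * d y x) by ring.
  by rewrite e1 e2 mulr0 subr0.
move/eqP; rewrite !mulf_eq0 => /orP[/orP[]|].
- by rewrite pnatr_eq0.
- by rewrite eq_complex /= oner_eq0 andbF.
- by rewrite /d subr_eq0 => /eqP.
Qed.

Local Notation fA := (ipA ip A).
Lemma fAlin a x y z : fA (a *: x + y) z = a * fA x z + fA y z.
Proof. by rewrite /ipA Alin iplin. Qed.
Lemma fAsym x y : fA y x = Num.conj (fA x y).
Proof. by rewrite /ipA A_selfadj ipsym. Qed.
Lemma fApos x : 0 <= fA x x.
Proof. exact: Apos.2. Qed.

Lemma mp_invA u : A (mp_inv ip A (A u)) = A u.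
Proof.
have [MA hMA] : exists MA, forall x, nr (A x) <= MA * nr x by case: Apos => [[_ h] _].
pose M := fun x => A x = 0.
have M0 : M 0 by exact: A0.
have MD : forall x y, M x -> M y -> M (x + y).
  by move=> x y; rewrite /M AD => -> ->; rewrite addr0.
have MZ : forall (a : C) x, M x -> M (a *: x).
  by move=> a x; rewrite /M AZ => ->; rewrite scaler0.
have Mcl : forall l, (forall e, 0 < e -> exists v, M v /\ nr (v - l) < e) -> M l.
  move=> l hl; apply: (n_small ippos ipdef) => e e0.
  set e' := e / (`|MA| + 1).
  have K1 : 0 < `|MA| + 1 by apply: ltr_wpDl.
  have e'0 : 0 < e' by rewrite divr_gt0.
  have [v [Mv hv]] := hl e' e'0.
  have -> : A l = A (l - v) by rewrite AB Mv subr0.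
  apply: le_lt_trans (hMA _) _.
  have h2 : MA * nr (l - v) <= `|MA| * nr (l - v).
    by apply: ler_wpM2r; [apply: n_ge0|apply: ler_norm].
  have h3 : `|MA| * nr (l - v) <= `|MA| * e'.
    by apply: ler_wpM2l => //; rewrite (nfB iplin ipsym) ltW.
  have h4 : `|MA| * e' = e - e'.
    by rewrite /e'; field; rewrite gt_eqF.
  have h5 : e - e' < e by rewrite ltrBlDr ltrDl.
  by apply: le_lt_trans (le_trans h2 h3) _; rewrite h4.
have [m [Mm Hm]] := proj_thm iplin ipsym ippos ipcomp M0 MD MZ Mcl u.
have ex : exists x, (forall n, A n = 0 -> ip x n = 0) /\ (forall w, ip (A u - A x) (A w) = 0).
  exists (u - m); split; first by move=> n An; apply: Hm.
  by move=> w; rewrite AB Mm subr0 subrr ip0l.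
rewrite /mp_inv.
case: (epsilon_spec (inhabits (0:H)) _ ex) => _.
set x := epsilon _ _ => h2.
have := h2 (u - x); rewrite AB => /ipdef /eqP.
by rewrite subr_eq0 => /eqP.
Qed.

Lemma adj_spec (T : H -> H) : (exists Ts, is_adjoint ip T Ts) -> is_adjoint ip T (adj ip T).
Proof. by move=> ex; rewrite /adj; apply: epsilon_spec. Qed.

Lemma adj_uniq T T1 T2 : is_adjoint ip T T1 -> is_adjoint ip T T2 -> forall y, T1 y = T2 y.
Proof.
move=> h1 h2 y; apply/eqP; rewrite -subr_eq0; apply/eqP; apply: ipdef.
by rewrite ipBr -h1 -h2 subrr.
Qed.

Lemma sharp_A (X : H -> H) :
  (forall z, exists u, adj ip X (A z) = A u) ->
  forall z, A (sharpA ip A X z) = adj ip X (A z).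
Proof. by move=> hr z; have [u hu] := hr z; rewrite /sharpA hu mp_invA. Qed.

Lemma sharp_key (X : H -> H) : is_adjoint ip X (adj ip X) ->
  (forall z, exists u, adj ip X (A z) = A u) ->
  forall w z, ip (A (sharpA ip A X w)) z = ip (A w) (X z).
Proof.
move=> hadj hr w z; rewrite sharp_A // (ipsym z) -hadj -ipsym //.
Qed.

Variable S : H -> H.
Hypothesis HS : in_BA ip A S.
Variable theta : R.

Local Notation nA := (normA ip A).

Lemma nA_CS x y : Normc.normc (fA x y) <= nA x * nA y.
Proof. exact: (f_CS' fAlin fAsym fApos). Qed.
Lemma nA_ge0 x : 0 <= nA x.
Proof. exact: sqrtr_ge0. Qed.
Lemma nAZ a x : nA (a *: x) = Normc.normc a * nA x.
Proof. exact: (nfZ fAlin fAsym fApos). Qed.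
Lemma nAD x y : nA (x + y) <= nA x + nA y.
Proof. exact: (nfD fAlin fAsym fApos). Qed.
Lemma nA2 x : nA x ^+ 2 = complex.Re (fA x x).
Proof. exact: (nf2 fApos). Qed.
Lemma fA_real x : fA x x = ((complex.Re (fA x x))%:C)%C.
Proof. exact: (f_real fApos). Qed.

Lemma Slin a x y : S (a *: x + y) = a *: S x + S y.
Proof. by case: HS => [[h _] _]. Qed.
Lemma S0 : S 0 = 0.
Proof. by have := Slin (-1) 0 0; rewrite scaler0 addr0 scaleN1r addNr. Qed.
Lemma SZ a x : S (a *: x) = a *: S x.
Proof. by rewrite -[a *: x]addr0 Slin S0 addr0. Qed.

Lemma Sadj : is_adjoint ip S (adj ip S).
Proof. apply: adj_spec; exact: (adj_exists iplin ipsym ippos ipdef ipcomp HS.1). Qed.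

Lemma Srange z : exists u, adj ip S (A z) = A u.
Proof. by case: HS => _ [Rop [_ HR]]; exists (Rop z); rewrite HR. Qed.

Local Notation e := (expi theta).
Local Notation eS := (fun x => e *: S x).

Lemma eSadj0 : is_adjoint ip eS (fun y => Num.conj e *: adj ip S y).
Proof. by move=> x y; rewrite ipZl Sadj ipZr cjK. Qed.

Lemma eSadj : is_adjoint ip eS (adj ip eS).
Proof. by apply: adj_spec; exists (fun y => Num.conj e *: adj ip S y); apply: eSadj0. Qed.

Lemma eSrange z : exists u, adj ip eS (A z) = A u.
Proof.
have [u hu] := Srange z; exists (Num.conj e *: u).
by rewrite (adj_uniq eSadj eSadj0) hu AZ.
Qed.

Lemma K1 w z : ip (A (sharpA ip A S w)) z = ip (A w) (S z).
Proof. exact: (sharp_key Sadj Srange). Qed.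
Lemma K2 w z : ip (A (sharpA ip A eS w)) z = ip (A w) (e *: S z).
Proof. exact: (sharp_key eSadj eSrange). Qed.

Lemma norm_e : Normc.normc e = 1.
Proof. by rewrite /= cos2Dsin2 sqrtr1. Qed.

Lemma norm_half : Normc.normc (2%:R^-1 : C) = 2%:R^-1.
Proof.
rewrite -(rmorph_nat (real_complex R)) -fmorphV c_normR ger0_norm //.
by rewrite invr_ge0.
Qed.

Lemma hT z : fA (e *: S z + sharpA ip A S (S z)) z =
  e * fA (S z) z + ((nA (S z) ^+ 2)%:C)%C.
Proof. by rewrite fAlin /ipA K1 nA2 -(fA_real (S z)). Qed.

Lemma hRt z : fA (ReA ip A eS z) z = ((complex.Re (e * fA (S z) z))%:C)%C.
Proof.
rewrite /ReA /= -[_ *: (_ + _)]addr0 fAlin fAlin /ipA K2 ipZr.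
rewrite -/(ipA ip A _ _) -/(ipA ip A _ _) -/(ipA ip A _ _) -/(ipA ip A _ _).
rewrite (fAsym (S z) z) ReJ_add.
have -> : (ipA ip A 0 z) = 0 by rewrite /ipA A0 ip0l.
rewrite addr0 mulrC; congr (_ * _).
by rewrite [X in _ = _ + X]cjM.
Qed.

Lemma main_ineq :
  dnumradA ip A S ^+ 2 <=
    numradA ip A (fun x => expi theta *: S x + sharpA ip A S (S x)) ^+ 2
    + 2%:R * opnormA ip A S ^+ 2 * opnormA ip A (ReA ip A (fun x => expi theta *: S x)).
Proof.
set U := unitA ip A.
pose LS := image U (fun z => Num.sqrt (Normc.normc (fA (S z) z) ^+ 2 + nA (S z) ^+ 4)).
pose OS := image U (fun z => nA (S z)).
pose NT := image U (fun z => Normc.normc (fA (e *: S z + sharpA ip A S (S z)) z)).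
pose NR := image U (fun z => nA (ReA ip A eS z)).
have -> : dnumradA ip A S = sup LS by [].
have -> : opnormA ip A S = sup OS by [].
have -> : numradA ip A (fun x => expi theta *: S x + sharpA ip A S (S x)) = sup NT by [].
have -> : opnormA ip A (ReA ip A (fun x => expi theta *: S x)) = sup NR by [].
have OS0 : 0 <= sup OS by apply: sup_ge0 => _ [z _ <-]; apply: nA_ge0.
have NT0 : 0 <= sup NT by apply: sup_ge0 => _ [z _ <-]; apply: c_norm_ge0.
have NR0 : 0 <= sup NR by apply: sup_ge0 => _ [z _ <-]; apply: nA_ge0.
set RHS := _ + _.
have RHS0 : 0 <= RHS by rewrite /RHS addr_ge0 ?sqr_ge0 // !mulr_ge0 ?sqr_ge0.
case: (pselect (has_sup LS)) => hLS; last by rewrite sup_out // expr0n.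
have [z0 [z0' Uz0 _]] := hLS.1.
have ubL := sup_upper_bound hLS.
set B := sup LS.
have B0 : 0 <= B by apply: le_trans (ubL _ (ex_intro2 _ _ z0' Uz0 erefl)); apply: sqrtr_ge0.
set K := 1 + B.
have K0 : 0 <= K by rewrite /K addr_ge0.
have hK : forall z, U z -> nA (S z) <= K.
  move=> z Uz; set t := nA (S z).
  have t0 : 0 <= t by apply: nA_ge0.
  have h1 : Num.sqrt (Normc.normc (fA (S z) z) ^+ 2 + t ^+ 4) <= B.
    by apply: ubL; exists z.
  have h2 : Normc.normc (fA (S z) z) ^+ 2 + t ^+ 4 <= B ^+ 2.
    rewrite -(@ler_pXn2r _ 2) ?nnegrE ?sqrtr_ge0 // in h1.
    by rewrite sqr_sqrtr ?addr_ge0 ?sqr_ge0 ?exprn_ge0 in h1.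
  have h3 : (t ^+ 2) ^+ 2 <= B ^+ 2.
    by rewrite -exprM; apply: le_trans h2; rewrite lerDr sqr_ge0.
  have h4 : t ^+ 2 <= B.
    by rewrite -(@ler_pXn2r _ 2) ?nnegrE ?sqr_ge0.
  rewrite /K; nra.
have hKw : forall w, 0 < nA w -> nA (S w) <= K * nA w.
  move=> w w0.
  set c := (((nA w)^-1)%:C)%C : C.
  have nc : Normc.normc c = (nA w)^-1 by rewrite c_normR ger0_norm // invr_ge0 ltW.
  have Uw : U (c *: w) by rewrite /U /unitA /= nAZ nc mulVf // gt_eqF.
  have := hK _ Uw; rewrite SZ nAZ nc.
  by rewrite mulrC ler_pdivrMr.
have hsh : forall z, U z -> nA (sharpA ip A eS z) <= K.
  move=> z Uz; set w := sharpA ip A eS z.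
  have [w0|wpos] := eqVneq (nA w) 0; first by rewrite w0.
  have wgt : 0 < nA w by rewrite lt_def wpos nA_ge0.
  have h1 : nA w ^+ 2 <= nA (S w).
    rewrite nA2 /ipA K2 -/(ipA ip A _ _).
    apply: le_trans (c_Re_le _) _; apply: le_trans (nA_CS _ _) _.
    by rewrite Uz mul1r nAZ norm_e mul1r.
  have h2 := le_trans h1 (hKw _ wgt).
  by rewrite expr2 ler_pM2r in h2.
have hRb : forall z, U z -> nA (ReA ip A eS z) <= K.
  move=> z Uz; rewrite /ReA nAZ norm_half.
  have h1 := nAD (e *: S z) (sharpA ip A eS z).
  rewrite nAZ norm_e mul1r in h1.
  have := hK z Uz; have := hsh z Uz.
  have := nA_ge0 (e *: S z + sharpA ip A eS z).
  move: h1; set a1 := nA (_ + _); set a2 := nA (S z); set a3 := nA (sharpA _ _ _ _).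
  move=> h1 h0 h3 h4.
  have -> : 2%:R^-1 * a1 = a1 / 2%:R by rewrite mulrC.
  rewrite ler_pdivrMr //; lra.
have hOS : has_sup OS.
  split; first by exists (nA (S z0')), z0'.
  by exists K => _ [z Uz <-]; apply: hK.
have hNT : has_sup NT.
  split; first by exists (Normc.normc (fA (e *: S z0' + sharpA ip A S (S z0')) z0')), z0'.
  exists (K + K ^+ 2) => _ [z Uz <-].
  rewrite hT; apply: le_trans (le_normcD _ _) _.
  rewrite Normc.normcM norm_e mul1r c_normR ger0_norm ?sqr_ge0 //.
  have h1 : Normc.normc (fA (S z) z) <= nA (S z).
    by apply: le_trans (nA_CS _ _) _; rewrite Uz mulr1.
  have h2 := hK z Uz; have h3 := nA_ge0 (S z).
  apply: lerD; first exact: le_trans h1 h2.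
  by apply: lerXn2r.
have hNR : has_sup NR.
  split; first by exists (nA (ReA ip A eS z0')), z0'.
  by exists K => _ [z Uz <-]; apply: hRb.
have hz : forall z, U z ->
    Normc.normc (fA (S z) z) ^+ 2 + nA (S z) ^+ 4 <= RHS.
  move=> z Uz.
  have hw : Normc.normc (fA (e *: S z + sharpA ip A S (S z)) z) <= sup NT.
    by apply: sup_upper_bound => //; exists z.
  have hr : nA (ReA ip A eS z) <= sup NR.
    by apply: sup_upper_bound => //; exists z.
  have hs : nA (S z) <= sup OS.
    by apply: sup_upper_bound => //; exists z.
  have hre : - complex.Re (e * fA (S z) z) <= sup NR.
    apply: le_trans hr; apply: le_trans (_ : _ <= Normc.normc (fA (ReA ip A eS z) z)) _.
      by rewrite hRt c_normR ler_normr lexx orbT.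
    by apply: le_trans (nA_CS _ _) _; rewrite Uz mulr1.
  rewrite hT in hw.
  have na : Normc.normc (fA (S z) z) = Normc.normc (e * fA (S z) z).
    by rewrite Normc.normcM norm_e mul1r.
  rewrite na.
  set b := nA (S z) ^+ 2.
  have b0 : 0 <= b by apply: sqr_ge0.
  have -> : nA (S z) ^+ 4 = b ^+ 2 by rewrite /b -exprM.
  have hb : b <= sup OS ^+ 2 by apply: lerXn2r => //; rewrite nnegrE nA_ge0.
  move: hw hre; set w := e * fA (S z) z => hw hre.
  have e1 : Normc.normc w ^+ 2 + b ^+ 2 =
      Normc.normc (w + (b%:C)%C) ^+ 2 - 2%:R * b * complex.Re w.
    rewrite !c_normE; case: w {hw hre} => u v /=; ring.
  rewrite e1 /RHS.
  have h1 : Normc.normc (w + (b%:C)%C) ^+ 2 <= sup NT ^+ 2.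
    by apply: lerXn2r => //; rewrite nnegrE c_norm_ge0.
  have h2 : - (2%:R * b * complex.Re w) <= 2%:R * b * sup NR.
    by rewrite -mulrN; apply: ler_wpM2l => //; rewrite mulr_ge0.
  have h3 : 2%:R * b * sup NR <= 2%:R * sup OS ^+ 2 * sup NR.
    by apply: ler_wpM2r => //; apply: ler_wpM2l.
  lra.
have hsup : B <= Num.sqrt RHS.
  apply: ge_sup => //; first by exists (Num.sqrt (Normc.normc (fA (S z0') z0') ^+ 2 + nA (S z0') ^+ 4)), z0'.
  by move=> _ [z Uz <-]; apply: ler_wsqrtr; apply: hz.
have hB2 : B ^+ 2 <= Num.sqrt RHS ^+ 2.
  by apply: lerXn2r; rewrite ?nnegrE ?sqrtr_ge0.
by rewrite sqr_sqrtr in hB2.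
Qed.

End Ops.

Local Close Scope classical_set_scope.

Theorem theorem2p13 (R : realType) (H : lmodType (R[i])) (ip : H -> H -> R[i])
  (A S : H -> H) (theta : R) :
  is_complex_hilbert ip ->
  positive_op ip A ->
  in_BA ip A S ->
  dnumradA ip A S ^+ 2 <=
    numradA ip A (fun x => expi theta *: S x + sharpA ip A S (S x)) ^+ 2
    + 2%:R * opnormA ip A S ^+ 2 * opnormA ip A (ReA ip A (fun x => expi theta *: S x)).
Proof.
move=> [h1 h2 h3 h4 h5] hA hS.
exact: (main_ineq h1 h2 h3 h4 h5 hA hS).
Qed.
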